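(* Let $\beta\in(0,1)$, $T\ge1$, and $\mathbf{x}_0,\mathbf{x}_1,\dots,\mathbf{x}_T\in\mathbb{R}^d$. For $n\in[T]$ let $q_{n,s}:=\beta^{n-s}\frac{1-\beta}{1-\beta^n}$ ($s=1,\dots,n$), let $\mathbf{X}_n$ be the random vector equal to $\mathbf{x}_s$ with probability $q_{n,s}$, and $\overline{\mathbf{x}}_n:=\mathbb{E}[\mathbf{X}_n]$. Let $\tau\in[T]$ be random with $\Pr(\tau=t)=\frac{1-\beta^t}{T}$ for $t\le T-1$ and $\Pr(\tau=T)=\frac{1-\beta^T}{(1-\beta)T}$. Then $$\mathbb{E}_\tau\mathbb{E}_{\mathbf{X}_\tau}\|\mathbf{X}_\tau-\overline{\mathbf{x}}_\tau\|^2\le\frac{2\beta}{(1-\beta)^2T}\sum_{n=1}^T\|\mathbf{x}_n-\mathbf{x}_{n-1}\|^2.$$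
   Context: Norms are Euclidean. *)

(* Defs.v *)
From mathcomp Require Import all_boot all_order all_algebra.
From mathcomp Require Import reals.
Set Implicit Arguments. Unset Strict Implicit. Unset Printing Implicit Defensive.
Import Order.TTheory GRing.Theory Num.Theory.
Local Open Scope ring_scope.

Definition sqnorm (R : realType) (d : nat) (v : 'rV[R]_d) : R :=
  \sum_(i < d) v 0 i ^+ 2.

Definition qw (R : realType) (beta : R) (n s : nat) : R :=
  beta ^+ (n - s) * (1 - beta) / (1 - beta ^+ n).

Definition xbar (R : realType) (d : nat) (beta : R) (x : nat -> 'rV[R]_d)
  (n : nat) : 'rV[R]_d :=
  \sum_(1 <= s < n.+1) qw beta n s *: x s.

Definition var_n (R : realType) (d : nat) (beta : R) (x : nat -> 'rV[R]_d)
  (n : nat) : R :=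
  \sum_(1 <= s < n.+1) qw beta n s * sqnorm (x s - xbar beta x n).

Definition ptau (R : realType) (beta : R) (T t : nat) : R :=
  if (t < T)%N then (1 - beta ^+ t) / T%:R
  else (1 - beta ^+ T) / ((1 - beta) * T%:R).

(* Main.v *)
Require Import Defs.
From mathcomp Require Import all_boot all_order all_algebra.
From mathcomp Require Import reals.
From mathcomp Require Import ring lra.
Import Order.TTheory GRing.Theory Num.Theory.
Set Implicit Arguments. Unset Strict Implicit. Unset Printing Implicit Defensive.
Local Open Scope ring_scope.

Definition Sf (R : realType) (b : R) (F : nat -> R) (t : nat) : R :=
  \sum_(1 <= s < t.+1) b ^+ (t - s) * F s.
Definition Wf (R : realType) (b : R) t := Sf b (fun _ => 1) t.
Definition Mf (R : realType) (b : R) (y : nat -> R) t :=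
  Sf b (fun s => y s ^+ 2) t - Sf b y t ^+ 2 / Wf b t.
Definition ef (R : realType) (b : R) (y : nat -> R) t :=
  y t - Sf b y t / Wf b t.

Lemma Sf_rec (R : realType) (b : R) (F : nat -> R) t :
  Sf b F t.+1 = b * Sf b F t + F t.+1.
Proof.
rewrite /Sf big_nat_recr //= subnn expr0 mul1r; congr (_ + _).
rewrite mulr_sumr; apply: eq_big_nat => s /andP [_ hs].
by rewrite subSn // exprS mulrA.
Qed.

Lemma Sf0 (R : realType) (b : R) F : Sf b F 0 = 0.
Proof. by rewrite /Sf big_geq. Qed.

Lemma Wf_closed (R : realType) (b : R) t : (1 - b) * Wf b t = 1 - b ^+ t.
Proof.
elim: t => [|t IH]; first by rewrite /Wf Sf0 expr0; ring.
rewrite /Wf Sf_rec -/(Wf b t) exprS.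
transitivity (b * ((1 - b) * Wf b t) + (1 - b)); first ring.
rewrite IH; ring.
Qed.

Lemma Wf_ge0 (R : realType) (b : R) t : 0 < b -> 0 <= Wf b t.
Proof.
move=> hb; rewrite /Wf /Sf; apply: sumr_ge0 => s _.
by rewrite mulr1 exprn_ge0 // ltW.
Qed.

Lemma Wf_gt0 (R : realType) (b : R) t : 0 < b -> (1 <= t)%N -> 0 < Wf b t.
Proof.
move=> hb; case: t => [//|t] _.
rewrite /Wf Sf_rec -/(Wf b t).
have := @Wf_ge0 _ _ t hb. move=> h. have : 0 <= b * Wf b t by rewrite mulr_ge0 // ltW.
lra.
Qed.

Lemma sq_expand (R : realType) (r : seq nat) (c y : nat -> R) (k m : R) :
  \sum_(i <- r) (c i * k) * (y i - m) ^+ 2 =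
  k * (\sum_(i <- r) c i * y i ^+ 2 - 2 * m * \sum_(i <- r) c i * y i
       + m ^+ 2 * \sum_(i <- r) c i * 1).
Proof.
elim: r => [|a r IH]; rewrite ?big_nil ?big_cons; first ring.
rewrite IH; ring.
Qed.

Lemma lin_expand (R : realType) (r : seq nat) (c y : nat -> R) (k : R) :
  \sum_(i <- r) (c i * k) * y i = k * \sum_(i <- r) c i * y i.
Proof.
elim: r => [|a r IH]; rewrite ?big_nil ?big_cons; first ring.
rewrite IH; ring.
Qed.

Definition v1 (R : realType) (b : R) (y : nat -> R) (t : nat) : R :=
  \sum_(1 <= s < t.+1) qw b t s *
     (y s - \sum_(1 <= s' < t.+1) qw b t s' * y s') ^+ 2.

Lemma qwE (R : realType) (b : R) t s : 0 < b -> b < 1 -> (1 <= t)%N ->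
  qw b t s = b ^+ (t - s) * (Wf b t)^-1.
Proof.
move=> h0 h1 ht; rewrite /qw -Wf_closed.
have hW := Wf_gt0 h0 ht.
field; apply/andP; split; [lra | lra].
Qed.

Lemma v1E (R : realType) (b : R) y t : 0 < b -> b < 1 -> (1 <= t)%N ->
  v1 b y t = Mf b y t / Wf b t.
Proof.
move=> h0 h1 ht; rewrite /v1.
have hq : forall s, qw b t s = b ^+ (t - s) * (Wf b t)^-1 by move=> s; apply: qwE.
have hb : \sum_(1 <= s' < t.+1) qw b t s' * y s' = (Wf b t)^-1 * Sf b y t.
  by under eq_bigr => s _ do rewrite hq; rewrite lin_expand.
rewrite hb.
under eq_bigr => s _ do rewrite hq.
rewrite sq_expand /Mf.
rewrite -/(Sf b y t) -/(Sf b (fun s => y s ^+ 2) t) -/(Sf b (fun _ => 1) t) -/(Wf b t).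
have hW := Wf_gt0 h0 ht.
field; lra.
Qed.
Lemma poly_ineq (R : realType) (b u v : R) : 0 < b -> b < 1 ->
  (1 - b) * ((1 - b) + 2 * b ^+ 2) * (u + v) ^+ 2 <= 2 * u ^+ 2 + 2 * (1 - b) * v ^+ 2.
Proof.
move=> h0 h1.
set s := 1 - b.
have hs : 0 < s by rewrite /s; lra.
set c := s + 2 * b ^+ 2.
have hc : 0 <= c by rewrite /c; have := sqr_ge0 b; lra.
have hc2 : c * (1 + s) <= 2.
  have -> : c * (1 + s) = 2 - b * (3 - 2 * b) * (1 - b) by rewrite /c /s; ring.
  have : 0 <= b * (3 - 2 * b) * (1 - b) by rewrite !mulr_ge0 //; lra.
  lra.
have hk : s * (u + v) ^+ 2 <= (1 + s) * (u ^+ 2 + s * v ^+ 2).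
  have -> : (1 + s) * (u ^+ 2 + s * v ^+ 2) = s * (u + v) ^+ 2 + (u - s * v) ^+ 2 by ring.
  have := sqr_ge0 (u - s * v); lra.
have hA : 0 <= u ^+ 2 + s * v ^+ 2 by have := sqr_ge0 u; have := mulr_ge0 (ltW hs) (sqr_ge0 v); lra.
have e1 : s * c * (u + v) ^+ 2 <= c * ((1 + s) * (u ^+ 2 + s * v ^+ 2)).
  have -> : s * c * (u + v) ^+ 2 = c * (s * (u + v) ^+ 2) by ring.
  by rewrite ler_wpM2l.
have e2 : c * (1 + s) * (u ^+ 2 + s * v ^+ 2) <= 2 * (u ^+ 2 + s * v ^+ 2).
  by rewrite ler_wpM2r.
have -> : 2 * u ^+ 2 + 2 * s * v ^+ 2 = 2 * (u ^+ 2 + s * v ^+ 2) by ring.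
rewrite -mulrA in e1 *. rewrite mulrA in e1. rewrite mulrA.
apply: le_trans e1 _. by rewrite mulrA.
Qed.

Lemma alg_ineq (R : realType) (b r u v : R) : 0 < b -> b < 1 -> 0 <= r -> r <= b ->
  r * (u + v) ^+ 2 + 2 * b / (1 - b) * r ^+ 2 * (u + v) ^+ 2
   - 2 * b / (1 - b) * v ^+ 2 <= 2 * b / (1 - b) ^+ 2 * u ^+ 2.
Proof.
move=> h0 h1 hr0 hrb.
have hs : 0 < 1 - b by lra.
have hB : 0 <= 2 * b / (1 - b) by rewrite divr_ge0 //; lra.
have hr2 : r ^+ 2 <= b ^+ 2 by rewrite ler_pXn2r // ?nnegrE //; lra.
have hw : 0 <= (u + v) ^+ 2 := sqr_ge0 _.
have h1' : r * (u + v) ^+ 2 + 2 * b / (1 - b) * r ^+ 2 * (u + v) ^+ 2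
   <= (b + 2 * b / (1 - b) * b ^+ 2) * (u + v) ^+ 2.
  have -> : r * (u + v) ^+ 2 + 2 * b / (1 - b) * r ^+ 2 * (u + v) ^+ 2 = (r + 2 * b / (1 - b) * r ^+ 2) * (u + v) ^+ 2 by ring.
  rewrite ler_wpM2r //.
  have : 2 * b / (1 - b) * r ^+ 2 <= 2 * b / (1 - b) * b ^+ 2 by rewrite ler_wpM2l.
  lra.
have hp := poly_ineq u v h0 h1.
have heq : (b + 2 * b / (1 - b) * b ^+ 2) * (u + v) ^+ 2
     - 2 * b / (1 - b) ^+ 2 * u ^+ 2 - 2 * b / (1 - b) * v ^+ 2
   = b / (1 - b) ^+ 2 * ((1 - b) * ((1 - b) + 2 * b ^+ 2) * (u + v) ^+ 2
        - (2 * u ^+ 2 + 2 * (1 - b) * v ^+ 2)).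
  by field; lra.
have hneg : b / (1 - b) ^+ 2 * ((1 - b) * ((1 - b) + 2 * b ^+ 2) * (u + v) ^+ 2
        - (2 * u ^+ 2 + 2 * (1 - b) * v ^+ 2)) <= 0.
  apply: mulr_ge0_le0; last by lra.
  by rewrite divr_ge0 ?exprn_ge0 //; lra.
lra.
Qed.

Lemma step (R : realType) (b : R) (y : nat -> R) t : 0 < b -> b < 1 -> (1 <= t)%N ->
  Mf b y t.+1 - b * Mf b y t + 2 * b / (1 - b) * ef b y t.+1 ^+ 2
   - 2 * b / (1 - b) * ef b y t ^+ 2 <= 2 * b / (1 - b) ^+ 2 * (y t.+1 - y t) ^+ 2.
Proof.
move=> h0 h1 ht.
have hW := Wf_gt0 h0 ht.
have hcl := Wf_closed b t.
have hbt : 0 <= b ^+ t by rewrite exprn_ge0 // ltW.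
rewrite /Mf /ef /Wf !Sf_rec -/(Wf b t).
set W := Wf b t in hW hcl *.
set P := Sf b y t. set Q := Sf b (fun s => y s ^+ 2) t.
have hbW : 0 < b * W + 1 by have := mulr_gt0 h0 hW; lra.
set r := b * W / (b * W + 1).
have key : b * Q + y t.+1 ^+ 2 - (b * P + y t.+1) ^+ 2 / (b * W + 1) -
  b * (Q - P ^+ 2 / W) +
  2 * b / (1 - b) * (y t.+1 - (b * P + y t.+1) / (b * W + 1)) ^+ 2 -
  2 * b / (1 - b) * (y t - P / W) ^+ 2
  = r * ((y t.+1 - y t) + (y t - P / W)) ^+ 2
    + 2 * b / (1 - b) * r ^+ 2 * ((y t.+1 - y t) + (y t - P / W)) ^+ 2
    - 2 * b / (1 - b) * (y t - P / W) ^+ 2.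
  rewrite /r; field.
  apply/and3P; split; [lra | lra | lra].
rewrite key; apply: alg_ineq => //.
  by rewrite /r divr_ge0 //; [rewrite mulr_ge0 // ltW | lra].
rewrite /r ler_pdivrMr //.
have : b * (W - b * W - 1) <= 0.
  apply: mulr_ge0_le0; first by lra.
  have -> : W - b * W = (1 - b) * W by ring.
  lra.
lra.
Qed.

Lemma Gbound (R : realType) (b : R) (y : nat -> R) T : 0 < b -> b < 1 -> (1 <= T)%N ->
  (1 - b) * \sum_(1 <= t < T) Mf b y t + Mf b y T + 2 * b / (1 - b) * ef b y T ^+ 2
  <= 2 * b / (1 - b) ^+ 2 * \sum_(1 <= n < T.+1) (y n - y n.-1) ^+ 2.
Proof.
move=> h0 h1; case: T => // T _.
have hK : 0 <= 2 * b / (1 - b) ^+ 2 by rewrite divr_ge0 ?exprn_ge0 //; lra.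
elim: T => [|T IH].
  rewrite big_geq // /Mf /ef /Wf !Sf_rec !Sf0 /=.
  have -> : (b * 0 + y 1%N ^+ 2 - (b * 0 + y 1%N) ^+ 2 / (b * 0 + 1)) = 0.
    by rewrite !mulr0 !add0r invr1 mulr1 subrr.
  have -> : y 1%N - (b * 0 + y 1%N) / (b * 0 + 1) = 0.
    by rewrite !mulr0 !add0r invr1 mulr1 subrr.
  rewrite expr0n /= mulr0 mulr0 !addr0.
  by apply: mulr_ge0 => //; apply: sumr_ge0 => n _; apply: sqr_ge0.
rewrite [in X in X <= _]big_nat_recr // [in X in _ <= X]big_nat_recr //=.
have hs := @step R b y T.+1 h0 h1 isT.
rewrite mulrDr.
lra.
Qed.

Lemma scalar (R : realType) (b : R) (y : nat -> R) T : 0 < b -> b < 1 -> (1 <= T)%N ->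
  \sum_(1 <= t < T.+1) ptau b T t * v1 b y t
  <= (2 * b) / ((1 - b) ^+ 2 * T%:R) * \sum_(1 <= n < T.+1) (y n - y n.-1) ^+ 2.
Proof.
move=> h0 h1 hT.
have hTp : 0 < T%:R :> R by rewrite ltr0n.
have hL : \sum_(1 <= t < T.+1) ptau b T t * v1 b y t
   = ((1 - b) * \sum_(1 <= t < T) Mf b y t + Mf b y T) / T%:R.
  rewrite big_nat_recr //=.
  have -> : \sum_(1 <= t < T) ptau b T t * v1 b y t
      = (1 - b) * (\sum_(1 <= t < T) Mf b y t) / T%:R.
    rewrite mulr_sumr mulr_suml; apply: eq_big_nat => t /andP [ht1 htT].
    rewrite /ptau htT v1E // -Wf_closed.
    have hW := Wf_gt0 h0 ht1.
    field; lra.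
  rewrite /ptau ltnn v1E // -Wf_closed.
  have hW := Wf_gt0 h0 hT.
  field; lra.
rewrite hL.
have hG := Gbound y h0 h1 hT.
have he : 0 <= 2 * b / (1 - b) * ef b y T ^+ 2.
  by rewrite mulr_ge0 ?sqr_ge0 // divr_ge0 //; lra.
have -> : 2 * b / ((1 - b) ^+ 2 * T%:R) * \sum_(1 <= n < T.+1) (y n - y n.-1) ^+ 2
   = (2 * b / (1 - b) ^+ 2 * \sum_(1 <= n < T.+1) (y n - y n.-1) ^+ 2) / T%:R.
  field; apply/andP; split; lra.
rewrite ler_pM2r ?invr_gt0 //.
lra.
Qed.

Lemma var_coord (R : realType) (d : nat) (b : R) (x : nat -> 'rV[R]_d) t :
  var_n b x t = \sum_(i < d) v1 b (fun s => x s 0 i) t.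
Proof.
rewrite /var_n /v1 /sqnorm.
under eq_bigr => s _ do rewrite mulr_sumr.
rewrite exchange_big /=; apply: eq_bigr => i _; apply: eq_bigr => s _.
congr (_ * _ ^+ 2).
rewrite !mxE /xbar summxE; congr (_ - _); apply: eq_bigr => s' _.
by rewrite mxE.
Qed.

Theorem lemma7 (R : realType) (d : nat) (beta : R) (T : nat)
  (x : nat -> 'rV[R]_d) :
  0 < beta -> beta < 1 -> (1 <= T)%N ->
  \sum_(1 <= t < T.+1) ptau beta T t * var_n beta x t
  <= (2 * beta) / ((1 - beta) ^+ 2 * T%:R)
     * \sum_(1 <= n < T.+1) sqnorm (x n - x n.-1).
Proof.
move=> h0 h1 hT.
under eq_bigr => t _ do rewrite var_coord mulr_sumr.
rewrite [in X in X <= _]exchange_big /=.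
rewrite /sqnorm [in X in _ <= X]exchange_big /= [in X in _ <= X]mulr_sumr.
apply: ler_sum => i _.
have -> : \sum_(1 <= j < T.+1) ((x j - x j.-1) 0 i) ^+ 2
   = \sum_(1 <= j < T.+1) (x j 0 i - x j.-1 0 i) ^+ 2.
  by apply: eq_bigr => j _; rewrite !mxE.
exact: scalar.
Qed.
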